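(* Let $p\geq 3$ and $q\geq 6$ be integers and let $C_{p,q}$ be a double chain consisting of $p$ points of $A$ and $q$ points of $B$, in general position. Then $\mu(D(C_{p,q}))=\binom{p+q}{2}-4$.
   Context: Let $A$ be the arc of a circle that goes from $(-5,2)$ to $(5,2)$ and passes through $(0,3/2)$, and let $B$ be the reflection of $A$ in the $x$-axis; then every point of $A$ (resp. $B$) lies above (resp. below) every line spanned by two points of $B$ (resp. $A$). For integers $p,q\geq 1$, a double chain $C_{p,q}$ is a set of $p+q$ points obtained by choosing $p$ points of $A$ and $q$ points of $B$. A set of points is in general position if no three are collinear. The disjointness graph of segments $D(P)$ is the graph whose vertices are all closed straight-line segments with both endpoints in $P$, two being adjacent if and only if they are disjoint. For a graph $G$ and $U\subseteq V(G)$, two distinct vertices $x,y\in U$ are $U$-mutually visible if $G$ contains a shortest $x$-$y$ path none of whose internal vertices lies in $U$; $U$ is a mutual-visibility set if every two distinct vertices of $U$ are $U$-mutually visible. $\mu(G)$ is the maximum size of a mutual-visibility set of $G$. *)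

(* Defs.v *)
From HB Require Import structures.
From mathcomp Require Import all_boot all_order all_algebra.
From mathcomp Require Import reals.
Set Implicit Arguments. Unset Strict Implicit. Unset Printing Implicit Defensive.
Import Order.TTheory GRing.Theory Num.Theory.
Local Open Scope ring_scope.

Section Geometry.
Variable R : realType.
Definition point := (R * R)%type.

(* The arc A: the lower arc of the circle centred at (0, 107/4) with radius
   101/4 (the circle through (-5,2), (5,2), (0,3/2)), between x = -5 and x = 5. *)
Definition on_arcA (z : point) : Prop :=
  z.1 ^+ 2 + (z.2 - 107%:R / 4%:R) ^+ 2 = (101%:R / 4%:R) ^+ 2
  /\ - 5%:R <= z.1 <= 5%:R /\ z.2 <= 2%:R.

Definition on_arcB (z : point) : Prop := on_arcA (z.1, - z.2).

Definition collinear (a b c : point) : Prop :=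
  (b.1 - a.1) * (c.2 - a.2) - (b.2 - a.2) * (c.1 - a.1) = 0.

Definition on_seg (a b z : point) : Prop :=
  exists t : R, 0 <= t <= 1 /\ z = ((1 - t) * a.1 + t * b.1, (1 - t) * a.2 + t * b.2).
End Geometry.

Definition dc_index (p q : nat) : finType := ('I_p + 'I_q)%type.

Section DoubleChain.
Variables (R : realType) (p q : nat) (a : 'I_p -> point R) (b : 'I_q -> point R).

Definition dc_pt (i : dc_index p q) : point R :=
  match i with inl i => a i | inr j => b j end.

Definition is_double_chain : Prop :=
  injective a /\ injective b /\ (forall i, on_arcA (a i)) /\ (forall j, on_arcB (b j)).

Definition general_position : Prop :=
  forall i j k : dc_index p q, i <> j -> j <> k -> i <> k ->
    ~ collinear (dc_pt i) (dc_pt j) (dc_pt k).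

(* Vertices of D(P): segments, i.e. 2-element subsets of the point set. *)
Definition segment_v : finType := {s : {set dc_index p q} | #|s| == 2}.

Definition in_segment (s : segment_v) (z : point R) : Prop :=
  exists i j, i \in val s /\ j \in val s /\ i <> j /\ on_seg (dc_pt i) (dc_pt j) z.

Definition disj_adj (s t : segment_v) : Prop :=
  ~ exists z, in_segment s z /\ in_segment t z.
End DoubleChain.

Section Visibility.
Variables (V : finType) (adj : V -> V -> Prop).

Fixpoint is_walk (x : V) (s : seq V) : Prop :=
  match s with [::] => True | y :: s' => adj x y /\ is_walk y s' end.

(* x :: s is a shortest x-y path. *)
Definition shortest_path (x y : V) (s : seq V) : Prop :=
  is_walk x s /\ last x s = y /\
  forall s', is_walk x s' -> last x s' = y -> (size s <= size s')%N.

Definition mutually_visible (U : {set V}) (x y : V) : Prop :=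
  exists s, shortest_path x y s /\
    forall z, z \in take (size s).-1 s -> z \notin U.

Definition mutual_visibility_set (U : {set V}) : Prop :=
  forall x y, x \in U -> y \in U -> x <> y -> mutually_visible U x y.

Definition mu_eq (m : nat) : Prop :=
  (exists U, mutual_visibility_set U /\ #|U| = m) /\
  (forall U, mutual_visibility_set U -> (#|U| <= m)%N).
End Visibility.

(* Main.v *)
Require Import Defs.
From HB Require Import structures.
From mathcomp Require Import all_boot all_order all_algebra.
From mathcomp Require Import reals.
From mathcomp Require Import ring lra zify.
From Stdlib Require Import Classical.
Set Implicit Arguments. Unset Strict Implicit. Unset Printing Implicit Defensive.
Import Order.TTheory GRing.Theory Num.Theory.

(* Proof: explicit 4-segment complement for the lower bound,
   pigeonhole on 3-element complements for the upper bound, using only the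
   orientation geometry of the two circular arcs. *)

Section Comb.
Variable T : finType.

Lemma two_el (w : {set T}) : #|w| = 2 -> exists x y, x != y /\ w = [set x; y].
Proof. by move/eqP/cards2P. Qed.

Lemma cardU_le (A B : {set T}) : #|A :|: B| <= #|A| + #|B|.
Proof. by rewrite cardsU leq_subr. Qed.

Definition Good (c e1 e2 : T) (w : {set T}) :=
  [/\ [set c; e1] != w, [set c; e2] != w & [|| c \in w, e1 \in w | e2 \in w]].

Lemma fresh_case (w1 w2 w3 : {set T}) (u v : T) :
  #|w1| = 2 -> #|w2| = 2 -> #|w3| = 2 -> 6 < #|T| -> u != v ->
  u \in w1 :|: w2 :|: w3 -> v \in w1 :|: w2 :|: w3 ->
  (u \in w1) || (v \in w1) -> (u \in w2) || (v \in w2) -> (u \in w3) || (v \in w3) ->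
  exists c e1 e2, [/\ c != e1, c != e2, e1 != e2 &
     [/\ Good c e1 e2 w1, Good c e1 e2 w2 & Good c e1 e2 w3]].
Proof.
move=> c1 c2 c3 cT uv hu hv h1 h2 h3.
set X := w1 :|: w2 :|: w3.
have cX : #|X| <= 6.
  apply: (leq_trans (cardU_le _ _)); rewrite c3.
  by apply: (leq_trans (leq_add (cardU_le _ _) (leqnn 2))); rewrite c1 c2.
have : ~: X != set0.
  rewrite -card_gt0; have := cardsC X; lia.
case/set0Pn => f; rewrite in_setC => fX.
have fu : f != u by apply: contraNneq fX => ->.
have fv : f != v by apply: contraNneq fX => ->.
have nw : forall w : {set T}, w \subset X -> f \notin w.
  by move=> w sw; apply/negP => fw; move/negP: fX; apply; exact: (subsetP sw).
have gd : forall w : {set T}, w \subset X -> (u \in w) || (v \in w) -> Good f u v w.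
  move=> w sw huv; split.
  - by apply/eqP => E; move: (nw w sw); rewrite -E !inE eqxx.
  - by apply/eqP => E; move: (nw w sw); rewrite -E !inE eqxx.
  - by case/orP: huv => ->; rewrite ?orbT.
exists f, u, v; split => //; split; apply: gd => //.
- by rewrite /X -setUA subsetUl.
- by rewrite /X -setUA setUCA subsetUl.
- by rewrite /X subsetUr.
Qed.

Lemma comb3 (w1 w2 w3 : {set T}) :
  #|w1| = 2 -> #|w2| = 2 -> #|w3| = 2 -> 6 < #|T| ->
  exists c e1 e2, [/\ c != e1, c != e2, e1 != e2 &
     [/\ Good c e1 e2 w1, Good c e1 e2 w2 & Good c e1 e2 w3]].
Proof.
move=> c1 c2 c3 cT.
have other : forall (w : {set T}) v, #|w| = 2 -> exists u, u \in w /\ u != v.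
  move=> w v /two_el [x [y [xy ->]]].
  case: (eqVneq x v) => [E|ne]; last by exists x; rewrite !inE eqxx.
  by exists y; rewrite !inE eqxx orbT; split => //; rewrite -E eq_sym.
have inX1 : forall x, x \in w1 -> x \in w1 :|: w2 :|: w3 by move=> x h; rewrite !inE h.
have inX2 : forall x, x \in w2 -> x \in w1 :|: w2 :|: w3 by move=> x h; rewrite !inE h ?orbT.
have inX3 : forall x, x \in w3 -> x \in w1 :|: w2 :|: w3 by move=> x h; rewrite !inE h ?orbT.
case: (boolP [exists v, (v \in w1) && (v \in w2)]) => [/existsP [v /andP [v1 v2]]|n12].
  have [u [u3 uv]] := other w3 v c3.
  apply: (fresh_case c1 c2 c3 cT uv (inX3 _ u3) (inX1 _ v1)); by rewrite ?v1 ?v2 ?u3 ?orbT.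
case: (boolP [exists v, (v \in w1) && (v \in w3)]) => [/existsP [v /andP [v1 v3]]|n13].
  have [u [u2 uv]] := other w2 v c2.
  apply: (fresh_case c1 c2 c3 cT uv (inX2 _ u2) (inX1 _ v1)); by rewrite ?v1 ?v3 ?u2 ?orbT.
case: (boolP [exists v, (v \in w2) && (v \in w3)]) => [/existsP [v /andP [v2 v3]]|n23].
  have [u [u1 uv]] := other w1 v c1.
  apply: (fresh_case c1 c2 c3 cT uv (inX1 _ u1) (inX2 _ v2)); by rewrite ?v2 ?v3 ?u1 ?orbT.
have d12 : forall x, x \in w1 -> x \in w2 -> False.
  by move=> x h1 h2; move/existsP: n12; apply; exists x; rewrite h1 h2.
have d13 : forall x, x \in w1 -> x \in w3 -> False.
  by move=> x h1 h2; move/existsP: n13; apply; exists x; rewrite h1 h2.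
have d23 : forall x, x \in w2 -> x \in w3 -> False.
  by move=> x h1 h2; move/existsP: n23; apply; exists x; rewrite h1 h2.
have [c [c' [_ E1]]] := two_el c1; have cv1 : c \in w1 by rewrite E1 !inE eqxx.
have [e1 [e1' [_ E2]]] := two_el c2; have ev1 : e1 \in w2 by rewrite E2 !inE eqxx.
have [e2 [e2' [_ E3]]] := two_el c3; have ev2 : e2 \in w3 by rewrite E3 !inE eqxx.
have ne : forall x y (A B : {set T}), x \in A -> y \in B -> (forall z, z \in A -> z \in B -> False) -> x != y.
  by move=> x y A B hx hy d; apply/eqP => E; subst; exact: d _ hx hy.
have nsub : forall x y (w : {set T}), x \notin w -> [set x; y] != w.
  by move=> x y w h; apply/eqP => E; move: h; rewrite -E !inE eqxx.
have nsub2 : forall x y (w : {set T}), y \notin w -> [set x; y] != w.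
  by move=> x y w h; apply/eqP => E; move: h; rewrite -E !inE eqxx orbT.
have nin : forall x (A B : {set T}), x \in A -> (forall z, z \in A -> z \in B -> False) -> x \notin B.
  by move=> x A B hx d; apply/negP => hb; exact: d _ hx hb.
have d21 : forall x, x \in w2 -> x \in w1 -> False by move=> x h1 h2; exact: d12 x h2 h1.
have d31 : forall x, x \in w3 -> x \in w1 -> False by move=> x h1 h2; exact: d13 x h2 h1.
have d32 : forall x, x \in w3 -> x \in w2 -> False by move=> x h1 h2; exact: d23 x h2 h1.
exists c, e1, e2; split.
- exact: ne cv1 ev1 d12.
- exact: ne cv1 ev2 d13.
- exact: ne ev1 ev2 d23.
split; split.
- exact: nsub2 (nin _ _ _ ev1 d21).
- exact: nsub2 (nin _ _ _ ev2 d31).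
- by rewrite cv1.
- exact: nsub (nin _ _ _ cv1 d12).
- exact: nsub (nin _ _ _ cv1 d12).
- by rewrite ev1 orbT.
- exact: nsub (nin _ _ _ cv1 d13).
- exact: nsub (nin _ _ _ cv1 d13).
- by rewrite ev2 !orbT.
Qed.
End Comb.

Local Open Scope ring_scope.

Section Geo.
Variable R : realType.
Implicit Types P Q M SS U V z : point R.

Definition orient P Q M := (Q.1 - P.1) * (M.2 - P.2) - (Q.2 - P.2) * (M.1 - P.1).

Lemma orient_cyc P Q M : orient P Q M = orient Q M P.
Proof. rewrite /orient; ring. Qed.
Lemma orient_swap P Q M : orient Q P M = - orient P Q M.
Proof. rewrite /orient; ring. Qed.

Lemma on_seg_sym P Q z : on_seg P Q z -> on_seg Q P z.
Proof.
case=> t [/andP [t0 t1] ->]; exists (1 - t); split.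
  by apply/andP; split; lra.
by congr (_, _); ring.
Qed.

Lemma on_seg_orient P Q z : on_seg P Q z -> orient P Q z = 0.
Proof. by case=> t [_ ->]; rewrite /orient /=; ring. Qed.

Lemma D1 P Q U V z : on_seg P Q z -> on_seg U V z ->
  0 < orient P Q U * orient P Q V -> False.
Proof.
move=> /on_seg_orient h [s [/andP [s0 s1] E]] hp.
move: h; rewrite E /orient /= => h.
have e : (1 - s) * orient P Q U + s * orient P Q V = 0.
  rewrite -h /orient; ring.
move: e; rewrite /orient.
set u := (_ - _ * _) in hp *; set v := (_ - _ * _) in hp *.
move=> e.
have e2 : (1 - s) * (u * u) + s * (u * v) = 0.
  by rewrite -(mulr0 u) -e; ring.
have h1 : 0 <= (1 - s) * (u * u) by apply: mulr_ge0; [lra | exact: sqr_ge0].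
have h2 : 0 <= s * (u * v) by apply: mulr_ge0; [lra | exact: ltW].
have h3 : s * (u * v) = 0 by lra.
move: h3 => /eqP; rewrite mulf_eq0 => /orP [/eqP sz|]; last by rewrite gt_eqF.
move: e2; rewrite sz subr0 mul1r mul0r addr0 => /eqP; rewrite mulf_eq0 orbb => /eqP u0.
have : u * v = 0 by rewrite u0 mul0r.
by move=> uv0; move: hp; rewrite uv0 ltxx.
Qed.

End Geo.

Section Arc.
Variable R : realType.
Implicit Types P Q M SS U V z : point R.

Lemma A_y z : on_arcA z -> 3%:R / 2%:R <= z.2 <= 2%:R.
Proof.
case=> e [/andP [x1 x2] y2]; apply/andP; split => //.
rewrite !expr2 in e; nra.
Qed.

Lemma A_inj P Q : on_arcA P -> on_arcA Q -> P.1 = Q.1 -> P = Q.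
Proof.
move=> hP hQ ex; have := A_y hP; have := A_y hQ.
case: hP => eP _; case: hQ => eQ _.
move=> /andP [q1 q2] /andP [p1 p2].
have : (P.2 - Q.2) * (P.2 + Q.2 - 2%:R * (107%:R / 4%:R)) = 0.
  have -> : (P.2 - Q.2) * (P.2 + Q.2 - 2%:R * (107%:R / 4%:R)) =
    (P.1 ^+ 2 + (P.2 - 107%:R / 4%:R) ^+ 2) - (Q.1 ^+ 2 + (Q.2 - 107%:R / 4%:R) ^+ 2)
    - (P.1 ^+ 2 - Q.1 ^+ 2) by ring.
  by rewrite eP eQ ex !subrr.
move/eqP; rewrite mulf_eq0 => /orP [/eqP h|/eqP h].
  move: ex h; case: P {eP p1 p2} => [x y]; case: Q {eQ q1 q2} => [x' y'] /= -> h.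
  by congr (_, _); lra.
exfalso; lra.
Qed.


Notation cc := (107%:R / 4%:R : R).
Notation rr := (101%:R / 4%:R : R).

Lemma convexA P M Q : on_arcA P -> on_arcA M -> on_arcA Q ->
  P.1 < M.1 -> M.1 < Q.1 -> orient P Q M < 0.
Proof.
move=> hP hM hQ pm mq.
have := A_y hM => /andP [_ m2].
case: hP => eP _; case: hQ => eQ _; case: hM => eM _.
set D := Q.1 - P.1; set al := M.1 - P.1; set be := Q.1 - M.1.
have D0 : D != 0 by rewrite /D subr_eq0 gt_eqF //; exact: lt_trans mq.
set Zy := (be * P.2 + al * Q.2) / D.
have key : M.1 ^+ 2 + (Zy - cc) ^+ 2 - rr ^+ 2 =
  (be * (P.1 ^+ 2 + (P.2 - cc) ^+ 2 - rr ^+ 2) + al * (Q.1 ^+ 2 + (Q.2 - cc) ^+ 2 - rr ^+ 2)) / D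
  - al * be / D ^+ 2 * ((Q.1 - P.1) ^+ 2 + (Q.2 - P.2) ^+ 2).
  rewrite /Zy /al /be /D; field; exact: D0.
rewrite eP eQ !subrr !mulr0 add0r mul0r sub0r in key.
have Dp : 0 < D by rewrite /D subr_gt0; exact: lt_trans mq.
have alp : 0 < al by rewrite /al subr_gt0.
have bep : 0 < be by rewrite /be subr_gt0.
have pos : 0 < al * be / D ^+ 2 * ((Q.1 - P.1) ^+ 2 + (Q.2 - P.2) ^+ 2).
  apply: mulr_gt0; first by apply: divr_gt0; [exact: mulr_gt0 | exact: exprn_gt0].
  have := exprn_gt0 2 Dp; have := sqr_ge0 (Q.2 - P.2); rewrite -/D; lra.
have lt1 : (Zy - cc) ^+ 2 < (M.2 - cc) ^+ 2 by lra.
have zy : M.2 < Zy by rewrite !expr2 in lt1; nra.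
have -> : orient P Q M = D * (M.2 - Zy).
  rewrite /orient /Zy /al /be /D; field; exact: D0.
by rewrite pmulr_rlt0 // subr_lt0.
Qed.


Lemma B_y z : on_arcB z -> - 2%:R <= z.2 <= - (3%:R / 2%:R).
Proof. move/A_y => /= /andP [h1 h2]; apply/andP; split; lra. Qed.

Lemma A_x z : on_arcA z -> - 5%:R <= z.1 <= 5%:R.
Proof. by case=> _ []. Qed.
Lemma B_x z : on_arcB z -> - 5%:R <= z.1 <= 5%:R.
Proof. by move/A_x. Qed.

Lemma belowA P Q SS : on_arcA P -> on_arcA Q -> on_arcB SS -> P.1 < Q.1 ->
  orient P Q SS < 0.
Proof.
move=> hP hQ hS pq.
move: (A_y hP) (A_y hQ) (B_y hS) (A_x hP) (A_x hQ) (B_x hS).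
move=> /andP [p1 p2] /andP [q1 q2] /andP [s1 s2] /andP [px1 px2] /andP [qx1 qx2] /andP [sx1 sx2].
case: hP => eP _; case: hQ => eQ _.
have e : (Q.2 - P.2) * (2%:R * cc - Q.2 - P.2) = (Q.1 - P.1) * (Q.1 + P.1).
  have -> : (Q.2 - P.2) * (2%:R * cc - Q.2 - P.2) = (Q.1 - P.1) * (Q.1 + P.1)
    - (Q.1 ^+ 2 + (Q.2 - cc) ^+ 2) + (P.1 ^+ 2 + (P.2 - cc) ^+ 2) by ring.
  by rewrite eP eQ subrK.
set w := 2%:R * cc - Q.2 - P.2 in e.
have wp : 99%:R / 2%:R <= w by rewrite /w; lra.
set D := Q.1 - P.1 in e *.
have Dp : 0 < D by rewrite /D subr_gt0.
have br : w * (SS.2 - P.2) - (Q.1 + P.1) * (SS.1 - P.1) < 0.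
  have h1 : w * (SS.2 - P.2) <= - (99%:R / 2%:R) * 3%:R by nra.
  have h2 : - 100%:R <= (Q.1 + P.1) * (SS.1 - P.1).
    have k1 : 0 <= (10%:R - (Q.1 + P.1)) * (10%:R - (SS.1 - P.1)) by apply: mulr_ge0; lra.
    have k2 : 0 <= (10%:R + (Q.1 + P.1)) * (10%:R + (SS.1 - P.1)) by apply: mulr_ge0; lra.
    nra.
  lra.
have : w * orient P Q SS = D * (w * (SS.2 - P.2) - (Q.1 + P.1) * (SS.1 - P.1)).
  rewrite /orient -/D; set d := Q.2 - P.2.
  have -> : D * (w * (SS.2 - P.2) - (Q.1 + P.1) * (SS.1 - P.1)) =
    w * (D * (SS.2 - P.2)) - (D * (Q.1 + P.1)) * (SS.1 - P.1) by ring.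
  rewrite -e /d; ring.
move=> h; have : w * orient P Q SS < 0 by rewrite h pmulr_rlt0.
rewrite pmulr_rlt0 //; lra.
Qed.


Definition refl z : point R := (z.1, - z.2).

Lemma orient_refl P Q M : orient (refl P) (refl Q) (refl M) = - orient P Q M.
Proof. rewrite /orient /refl /=; ring. Qed.
Lemma onB_refl z : on_arcB z -> on_arcA (refl z).
Proof. by []. Qed.
Lemma onA_refl z : on_arcA z -> on_arcB (refl z).
Proof. by rewrite /on_arcB /refl /= opprK; case: z. Qed.
Lemma on_seg_refl P Q z : on_seg P Q z -> on_seg (refl P) (refl Q) (refl z).
Proof.
case=> t [ht ->]; exists t; split => //; rewrite /refl /=; congr (_, _); ring.
Qed.

Lemma aboveB P Q SS : on_arcB P -> on_arcB Q -> on_arcA SS -> P.1 < Q.1 ->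
  0 < orient P Q SS.
Proof.
move=> hP hQ hS pq.
have := belowA (onB_refl hP) (onB_refl hQ) (onA_refl hS) pq.
rewrite orient_refl; lra.
Qed.

Lemma convexB P M Q : on_arcB P -> on_arcB M -> on_arcB Q ->
  P.1 < M.1 -> M.1 < Q.1 -> 0 < orient P Q M.
Proof.
move=> hP hM hQ pm mq.
have := convexA (onB_refl hP) (onB_refl hM) (onB_refl hQ) pm mq.
rewrite orient_refl; lra.
Qed.

Lemma outsideA P Q M : on_arcA P -> on_arcA Q -> on_arcA M -> P.1 < Q.1 ->
  M.1 < P.1 \/ Q.1 < M.1 -> 0 < orient P Q M.
Proof.
move=> hP hQ hM pq [mp|qm].
  have := convexA hM hP hQ mp pq.
  have -> : orient M Q P = - orient P Q M by rewrite /orient; ring.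
  lra.
have := convexA hP hQ hM pq qm.
have -> : orient P M Q = - orient P Q M by rewrite /orient; ring.
lra.
Qed.

Lemma outsideB P Q M : on_arcB P -> on_arcB Q -> on_arcB M -> P.1 < Q.1 ->
  M.1 < P.1 \/ Q.1 < M.1 -> orient P Q M < 0.
Proof.
move=> hP hQ hM pq h.
have := outsideA (onB_refl hP) (onB_refl hQ) (onB_refl hM) pq h.
rewrite orient_refl; lra.
Qed.

Lemma HAB A L K M z : on_arcA A -> on_arcB L -> on_arcB K -> on_arcB M ->
  (L.1 < K.1 /\ L.1 < M.1) \/ (K.1 < L.1 /\ M.1 < L.1) ->
  on_seg A L z -> on_seg K M z -> False.
Proof.
move=> hA hL hK hM h s1 s2; apply: (D1 s1 s2).
rewrite (orient_cyc A L K) (orient_cyc A L M).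
case: h => [[lk lm]|[kl ml]].
  by apply: mulr_gt0; apply: aboveB.
rewrite (orient_swap K L A) (orient_swap M L A) mulrNN.
by apply: mulr_gt0; apply: aboveB.
Qed.

Lemma L2pt A L K M z : on_arcA A -> on_arcB L -> on_arcB K -> on_arcB M ->
  L.1 != K.1 -> L.1 != M.1 -> K.1 != M.1 ->
  on_seg A L z -> on_seg K M z -> False.
Proof.
move=> hA hL hK hM lk lm km.
wlog km' : K M hK hM lk lm km / K.1 < M.1.
  move=> W s1 s2; have [km2|mk] := ltP K.1 M.1; first exact: (W K M).
  have mk' : M.1 < K.1 by rewrite lt_neqAle mk andbT eq_sym.
  apply: (W M K) => //; [by rewrite eq_sym | exact: on_seg_sym].
move=> s1 s2.
have [lk'|kl] := ltP L.1 K.1.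
  by apply: (HAB hA hL hK hM _ s1 s2); left; split => //; exact: lt_trans km'.
have kl' : K.1 < L.1 by rewrite lt_neqAle eq_sym lk.
have [lm'|ml] := ltP L.1 M.1.
  apply: (D1 s2 (on_seg_sym s1)).
  by apply: mulr_gt0; [apply: convexB | apply: aboveB].
have ml' : M.1 < L.1 by rewrite lt_neqAle eq_sym lm.
by apply: (HAB hA hL hK hM _ s1 s2); right.
Qed.

Definition okB P Q X := on_arcA X \/ (on_arcB X /\ (X.1 < P.1 \/ Q.1 < X.1)).
Definition okA P Q X := on_arcB X \/ (on_arcA X /\ (X.1 < P.1 \/ Q.1 < X.1)).

Lemma freeB P Q U V z : on_arcB P -> on_arcB Q -> P.1 < Q.1 ->
  okB P Q U -> okB P Q V -> on_seg P Q z -> on_seg U V z -> False.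
Proof.
move=> hP hQ pq.
have gen : forall U V, on_arcA U -> on_arcB V -> (V.1 < P.1 \/ Q.1 < V.1) ->
    on_seg P Q z -> on_seg U V z -> False.
  move=> U' V' hU hV hx s1 s2; apply: (HAB hU hV hP hQ _ s2 s1).
  case: hx => h; [left | right]; split => //; [exact: lt_trans pq | exact: lt_trans h].
case=> [hU|[hU hxU]] [hV|[hV hxV]] s1 s2.
- by apply: (D1 s1 s2); apply: mulr_gt0; apply: aboveB.
- exact: (gen U V).
- exact: (gen V U _ _ _ s1 (on_seg_sym s2)).
- apply: (D1 s1 s2).
  have := outsideB hP hQ hU pq hxU; have := outsideB hP hQ hV pq hxV.
  move=> a1 a2; rewrite -mulrNN; apply: mulr_gt0; lra.
Qed.

Lemma freeA P Q U V z : on_arcA P -> on_arcA Q -> P.1 < Q.1 ->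
  okA P Q U -> okA P Q V -> on_seg P Q z -> on_seg U V z -> False.
Proof.
move=> hP hQ pq hU hV s1 s2.
have ok : forall X, okA P Q X -> okB (refl P) (refl Q) (refl X).
  move=> X [h|[h1 h2]]; [left; exact: onB_refl | right; split => //; exact: onA_refl].
apply: (freeB (onA_refl hP) (onA_refl hQ) pq (ok _ hU) (ok _ hV)
   (on_seg_refl s1) (on_seg_refl s2)).
Qed.

End Arc.

Section Sorting.
Variable R : realType.
Variables (n : nat) (f : 'I_n -> R) (finj : injective f) (j0 : 'I_n).
Definition ssq := sort (fun i j => f i <= f j) (enum 'I_n).
Definition sidx k := nth j0 ssq k.
Lemma ssq_size : size ssq = n. Proof. by rewrite size_sort size_enum_ord. Qed.
Lemma ssq_uniq : uniq ssq. Proof. by rewrite sort_uniq enum_uniq. Qed.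
Lemma ssq_sorted : sorted (fun i j => f i <= f j) ssq.
Proof. apply: sort_sorted => i j; exact: le_total. Qed.
Lemma sidx_le k l : (k <= l)%N -> (l < n)%N -> f (sidx k) <= f (sidx l).
Proof.
move=> kl ln.
have := sorted_leq_nth (fun y x z (h1 : f x <= f y) h2 => le_trans h1 h2)
  (fun i => lexx (f i)) j0 ssq_sorted.
move=> /(_ k l); rewrite !inE ssq_size; apply => //; exact: leq_ltn_trans ln.
Qed.
Lemma sidx_inj k l : (k < n)%N -> (l < n)%N -> sidx k = sidx l -> k = l.
Proof.
move=> kn ln /eqP; rewrite /sidx nth_uniq ?ssq_size ?ssq_uniq //; exact/eqP.
Qed.
Lemma sidx_lt k l : (k < l)%N -> (l < n)%N -> f (sidx k) < f (sidx l).
Proof.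
move=> kl ln; rewrite lt_neqAle sidx_le ?andbT; last by [] ; last exact: ltnW.
apply/eqP => /finj /sidx_inj E; have := E (ltn_trans kl ln) ln; lia.
Qed.
Lemma sidx_consec k j : (k.+1 < n)%N -> f (sidx k) < f j -> f j < f (sidx k.+1) -> False.
Proof.
move=> kn h1 h2.
have jin : j \in ssq by rewrite mem_sort mem_enum.
have mn : (index j ssq < n)%N by rewrite -[X in (_ < X)%N]ssq_size index_mem.
have E : sidx (index j ssq) = j by rewrite /sidx nth_index.
rewrite -E in h1 h2.
have [mk|km] := leqP (index j ssq) k.
  by have := sidx_le mk (ltn_trans (ltnSn k) kn); rewrite leNgt h1.
have [mk|km'] := leqP k.+1 (index j ssq).
  by have := sidx_le mk mn; rewrite leNgt h2.
lia.
Qed.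
End Sorting.

Section Main.
Variable R : realType.
Variables (p q : nat) (a : 'I_p -> point R) (b : 'I_q -> point R).
Hypotheses (hp : (3 <= p)%N) (hq : (6 <= q)%N) (hdc : is_double_chain a b).

Notation T := (dc_index p q).
Notation seg := (segment_v p q).
Notation pt := (dc_pt a b).
Notation adj := (disj_adj a b).

Lemma onA i : on_arcA (a i). Proof. by case: hdc => _ [_ [h _]]. Qed.
Lemma onB j : on_arcB (b j). Proof. by case: hdc => _ [_ [_ h]]. Qed.

Lemma B_inj (P Q : point R) : on_arcB P -> on_arcB Q -> P.1 = Q.1 -> P = Q.
Proof.
move=> hP hQ e; have E := A_inj (onB_refl hP) (onB_refl hQ) e.
have e2 : P.2 = Q.2 by have := congr1 snd E; rewrite /refl /= => /oppr_inj.
by case: P Q e e2 {hP hQ E} => [x y] [x' y'] /= -> ->.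
Qed.

Definition fA (i : 'I_p) := (a i).1.
Definition fB (j : 'I_q) := (b j).1.
Lemma fA_inj : injective fA.
Proof. move=> i j /(A_inj (onA i) (onA j)); by case: hdc => h _; apply: h. Qed.
Lemma fB_inj : injective fB.
Proof. move=> i j /(B_inj (onB i) (onB j)); by case: hdc => _ [h _]; apply: h. Qed.

Definition i0 : 'I_p := Ordinal (leq_trans (isT : (0 < 3)%N) hp).
Definition j0 : 'I_q := Ordinal (leq_trans (isT : (0 < 6)%N) hq).
Definition gA k := sidx fA i0 k.
Definition gB k := sidx fB j0 k.

Lemma gA_lt k l : (k < l)%N -> (l < p)%N -> fA (gA k) < fA (gA l).
Proof. exact: (sidx_lt fA_inj i0). Qed.
Lemma gB_lt k l : (k < l)%N -> (l < q)%N -> fB (gB k) < fB (gB l).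
Proof. exact: (sidx_lt fB_inj j0). Qed.
Lemma gB_inj k l : (k < q)%N -> (l < q)%N -> gB k = gB l -> k = l.
Proof. exact: sidx_inj. Qed.

Lemma seg2 (s : seg) : exists i j, i != j /\ val s = [set i; j].
Proof. by have /cards2P := valP s. Qed.

Lemma on_seg0 (P Q : point R) : on_seg P Q P.
Proof.
exists 0; split; first by rewrite lexx ler01.
by rewrite subr0 !mul1r !mul0r !addr0; case: P.
Qed.

Lemma inseg (s : seg) i j z : val s = [set i; j] -> in_segment a b s z ->
  on_seg (pt i) (pt j) z.
Proof.
move=> E [i' [j' [hi [hj [ne h]]]]]; rewrite E !inE in hi hj.
case/orP: hi => /eqP ? ; case/orP: hj => /eqP ?; subst => //.
exact: on_seg_sym.
Qed.

Lemma disjP (s t : seg) i j k l : val s = [set i; j] -> val t = [set k; l] ->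
  (forall z, on_seg (pt i) (pt j) z -> on_seg (pt k) (pt l) z -> False) -> adj s t.
Proof. by move=> hs ht H [z [h1 h2]]; exact: H z (inseg hs h1) (inseg ht h2). Qed.

Lemma adj_sym (s t : seg) : adj s t -> adj t s.
Proof. by move=> H [z [h1 h2]]; apply: H; exists z. Qed.

Lemma in_seg_pt (s : seg) u : u \in val s -> in_segment a b s (pt u).
Proof.
move=> hu; have [i [j [ne E]]] := seg2 s.
move: (hu); rewrite E !inE => /orP [/eqP ->|/eqP ->].
  by exists i, j; rewrite E !inE !eqxx ?orbT; do 3!split => //; [exact/eqP | exact: on_seg0].
exists j, i; rewrite E !inE !eqxx ?orbT; do 3!split => //; last exact: on_seg0.
by apply/eqP; rewrite eq_sym.
Qed.

Lemma share (s t : seg) u : u \in val s -> u \in val t -> ~ adj s t.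
Proof. by move=> hs ht H; apply: H; exists (pt u); split; apply: in_seg_pt. Qed.


Definition SA k : {set T} := [set inl (gA k); inl (gA k.+1)].
Definition SB k : {set T} := [set inr (gB k); inr (gB k.+1)].

Lemma outside (x P Q : R) : x != P -> x != Q -> ~ (P < x < Q) -> x < P \/ Q < x.
Proof.
move=> xP xQ nb; have [h|h] := ltP x P; first by left.
right; have h' : P < x by rewrite lt_neqAle eq_sym xP h.
have [//|h2] := ltP Q x; exfalso; apply: nb; rewrite h' /=.
by rewrite lt_neqAle xQ h2.
Qed.

Lemma okB_idx k u : (k.+1 < q)%N -> u \notin SB k ->
  okB (b (gB k)) (b (gB k.+1)) (pt u).
Proof.
move=> kq; case: u => [i|j] hu; first by left; exact: onA.
right; split; first exact: onB.
move: hu; rewrite !inE negb_or => /andP [n1 n2].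
apply: outside.
- by apply/eqP => E; move/negP: n1; apply; rewrite (fB_inj E).
- by apply/eqP => E; move/negP: n2; apply; rewrite (fB_inj E).
- by case/andP => h1 h2; exact: (sidx_consec (f:=fB) (j0:=j0) kq h1 h2).
Qed.

Lemma okA_idx k u : (k.+1 < p)%N -> u \notin SA k ->
  okA (a (gA k)) (a (gA k.+1)) (pt u).
Proof.
move=> kp; case: u => [i|j] hu; last by left; exact: onB.
right; split; first exact: onA.
move: hu; rewrite !inE negb_or => /andP [n1 n2].
apply: outside.
- by apply/eqP => E; move/negP: n1; apply; rewrite (fA_inj E).
- by apply/eqP => E; move/negP: n2; apply; rewrite (fA_inj E).
- by case/andP => h1 h2; exact: (sidx_consec (f:=fA) (j0:=i0) kp h1 h2).
Qed.

Lemma freeSB k (w s : seg) : (k.+1 < q)%N -> val w = SB k ->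
  (forall u, u \in val s -> u \notin SB k) -> adj w s.
Proof.
move=> kq hw hs; have [i [j [ne E]]] := seg2 s.
apply: (disjP hw E) => z.
apply: (freeB (onB _) (onB _) (gB_lt (ltnSn k) kq)).
- by apply: okB_idx => //; apply: hs; rewrite E !inE eqxx.
- by apply: okB_idx => //; apply: hs; rewrite E !inE eqxx orbT.
Qed.

Lemma freeSA k (w s : seg) : (k.+1 < p)%N -> val w = SA k ->
  (forall u, u \in val s -> u \notin SA k) -> adj w s.
Proof.
move=> kp hw hs; have [i [j [ne E]]] := seg2 s.
apply: (disjP hw E) => z.
apply: (freeA (onA _) (onA _) (gA_lt (ltnSn k) kp)).
- by apply: okA_idx => //; apply: hs; rewrite E !inE eqxx.
- by apply: okA_idx => //; apply: hs; rewrite E !inE eqxx orbT.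
Qed.

Definition SS (m : nat) : {set T} :=
  match m with 0 => SA 0 | 1 => SB 0 | 2 => SB 2 | 3 => SB 4 | _ => set0 end.

Lemma q1 : (1 < q)%N. Proof. exact: leq_trans hq. Qed.
Lemma q3 : (3 < q)%N. Proof. exact: leq_trans hq. Qed.
Lemma q5 : (5 < q)%N. Proof. exact: leq_trans hq. Qed.
Lemma p1 : (1 < p)%N. Proof. exact: leq_trans hp. Qed.

Lemma SB_dis k l u : (k <= 4)%N -> (l <= 4)%N -> u \in SB k -> u \in SB l ->
  [\/ k = l, k = l.+1 | l = k.+1].
Proof.
move=> kq lq; have := hq => hq'; rewrite !inE => /orP [/eqP ->|/eqP ->] /orP [/eqP E|/eqP E]; case: E => E.
- by constructor 1; apply: (gB_inj _ _ E); lia.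
- by constructor 2; apply: (gB_inj _ _ E); lia.
- by constructor 3; apply/esym; apply: (gB_inj _ _ E); lia.
- by constructor 1; apply/eq_add_S; apply: (gB_inj _ _ E); lia.
Qed.

Lemma disS m n u : u \in SS m -> u \in SS n -> m = n.
Proof.
have h1 := q1; have h3 := q3; have h5 := q5.
case: m => [|[|[|[|m]]]]; case: n => [|[|[|[|n]]]] //= H1 H2;
  try (by rewrite inE in H1); try (by rewrite inE in H2);
  try (by move: H1 H2; rewrite !inE => /orP [] /eqP -> //=);
  case: (SB_dis _ _ H1 H2) => // E; lia.
Qed.

Lemma neqS m n u v : u \in SS m -> v \in SS n -> m != n -> u != v.
Proof. by move=> hu hv; apply: contra => /eqP E; subst; apply/eqP; exact: disS hu hv. Qed.

Lemma S0_inl u : u \in SS 0 -> exists i, u = inl i.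
Proof. by rewrite /= !inE => /orP [] /eqP ->; eexists. Qed.
Lemma S_inr m u : (0 < m)%N -> u \in SS m -> exists j, u = inr j.
Proof.
case: m => [|[|[|[|m]]]] //= _; rewrite ?inE //; by move=> /orP [] /eqP ->; eexists.
Qed.


Lemma cards2_ne (i j : T) : i != j -> #|[set i; j]| == 2.
Proof. by move=> h; rewrite cards2 h. Qed.
Definition mkseg (i j : T) (h : i != j) : seg := exist _ [set i; j] (cards2_ne h).

Lemma neA : (inl (gA 0) : T) != inl (gA 1).
Proof. apply/eqP => -[] E; have := gA_lt (isT : (0 < 1)%N) p1; rewrite E ltxx. by []. Qed.
Lemma neB k (hk : (k.+1 < q)%N) : (inr (gB k) : T) != inr (gB k.+1).
Proof. apply/eqP => -[] E; have := gB_lt (ltnSn k) hk; rewrite E ltxx. by []. Qed.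

Definition W0seg m : seg :=
  match m with 0 => mkseg neA | 1 => mkseg (neB q1) | 2 => mkseg (neB q3)
  | _ => mkseg (neB q5) end.

Lemma W0seg_val m : (m < 4)%N -> val (W0seg m) = SS m.
Proof. by case: m => [|[|[|[|m]]]]. Qed.

Lemma W0free m (s : seg) : (m < 4)%N -> (forall u, u \in val s -> u \notin SS m) ->
  adj (W0seg m) s.
Proof.
case: m => [|[|[|[|m]]]] // _ H.
- exact: (@freeSA 0 (W0seg 0) s p1 erefl H).
- exact: (@freeSB 0 (W0seg 1) s q1 erefl H).
- exact: (@freeSB 2 (W0seg 2) s q3 erefl H).
- exact: (@freeSB 4 (W0seg 3) s q5 erefl H).
Qed.

Lemma core (x y : seg) i j k l m1 m2 m3 :
  val x = [set i; j] -> val y = [set k; l] -> i \in SS 0 -> j \in SS m1 ->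
  k \in SS m2 -> l \in SS m3 -> (0 < m1)%N -> (0 < m2)%N -> (0 < m3)%N ->
  m1 != m2 -> m1 != m3 -> m2 != m3 -> adj x y.
Proof.
move=> hx hy hi hj hk hl p1' p2' p3' n12 n13 n23.
have jk := neqS hj hk n12; have jl := neqS hj hl n13; have kl := neqS hk hl n23.
have [i' ei] := S0_inl hi; have [j' ej] := S_inr p1' hj.
have [k' ek] := S_inr p2' hk; have [l' el] := S_inr p3' hl.
subst; apply: (disjP hx hy) => z.
apply: (L2pt (onA i') (onB j') (onB k') (onB l')).
- by apply/eqP => /fB_inj E; rewrite E eqxx in jk.
- by apply/eqP => /fB_inj E; rewrite E eqxx in jl.
- by apply/eqP => /fB_inj E; rewrite E eqxx in kl.
Qed.

Lemma core2 (x y : seg) i j k l m1 m2 m3 :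
  val x = [set j; i] -> val y = [set k; l] -> i \in SS 0 -> j \in SS m1 ->
  k \in SS m2 -> l \in SS m3 -> (0 < m1)%N -> (0 < m2)%N -> (0 < m3)%N ->
  m1 != m2 -> m1 != m3 -> m2 != m3 -> adj x y.
Proof. by move=> hx; apply: core; rewrite hx setUC. Qed.

Lemma core3 (x y : seg) i j k l m1 m2 m3 :
  val x = [set k; l] -> val y = [set i; j] -> i \in SS 0 -> j \in SS m1 ->
  k \in SS m2 -> l \in SS m3 -> (0 < m1)%N -> (0 < m2)%N -> (0 < m3)%N ->
  m1 != m2 -> m1 != m3 -> m2 != m3 -> adj x y.
Proof. by move=> hx hy hi hj hk hl a1 a2 a3 b1 b2 b3; apply: adj_sym; apply: (core hy hx hi hj hk hl). Qed.

Lemma core4 (x y : seg) i j k l m1 m2 m3 :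
  val x = [set k; l] -> val y = [set j; i] -> i \in SS 0 -> j \in SS m1 ->
  k \in SS m2 -> l \in SS m3 -> (0 < m1)%N -> (0 < m2)%N -> (0 < m3)%N ->
  m1 != m2 -> m1 != m3 -> m2 != m3 -> adj x y.
Proof. by move=> hx hy; apply: core3 hx _; rewrite hy setUC. Qed.

Ltac disc := exfalso; match goal with H : is_true (?u \in ?A), H' : is_true (?u \in ?B) |- _ =>
      let E := fresh in pose proof (disS H H') as E; discriminate E end.

Ltac lbt hx hy := first
  [ solve [disc]
  | by eapply (core hx hy); (eassumption || done)
  | by eapply (core2 hx hy); (eassumption || done)
  | by eapply (core3 hx hy); (eassumption || done)
  | by eapply (core4 hx hy); (eassumption || done) ].

Lemma LB_pair (x y : seg) : ~ adj x y ->
  exists m, [/\ (m < 4)%N, adj (W0seg m) x & adj (W0seg m) y].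
Proof.
move=> nxy; have [x1 [x2 [nx hx]]] := seg2 x; have [y1 [y2 [ny hy]]] := seg2 y.
have key : forall m, (m < 4)%N ->
    [\/ x1 \in SS m, x2 \in SS m, y1 \in SS m | y2 \in SS m] \/
    (adj (W0seg m) x /\ adj (W0seg m) y).
  move=> m hm.
  case: (boolP [|| x1 \in SS m, x2 \in SS m, y1 \in SS m | y2 \in SS m]) => [/or4P H|H].
    by left.
  right; split; apply: W0free => // u; rewrite ?hx ?hy !inE => /orP [] /eqP ->;
    by apply: contra H => ->; rewrite /= ?orbT.
case: (key 0%N isT) => [h0|[? ?]]; last by exists 0%N.
case: (key 1%N isT) => [h1|[? ?]]; last by exists 1%N.
case: (key 2%N isT) => [h2|[? ?]]; last by exists 2%N.
case: (key 3%N isT) => [h3|[? ?]]; last by exists 3%N.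
exfalso; apply: nxy.
case: h0 => H0; case: h1 => H1; try solve [disc]; case: h2 => H2; try solve [disc];
  case: h3 => H3; lbt hx hy.
Qed.

Lemma S_elem m : (m < 4)%N -> exists u, u \in SS m.
Proof.
case: m => [|[|[|[|m]]]] // _.
- by exists (inl (gA 0)); rewrite !inE eqxx.
- by exists (inr (gB 0)); rewrite !inE eqxx.
- by exists (inr (gB 2)); rewrite !inE eqxx.
- by exists (inr (gB 4)); rewrite !inE eqxx.
Qed.

Definition W0 : {set seg} := [set W0seg (val m) | m : 'I_4].

Lemma W0seg_inj : injective (fun m : 'I_4 => W0seg (val m)).
Proof.
move=> m n E; apply: val_inj.
have := congr1 val E; rewrite !W0seg_val ?ltn_ord // => ES.
have [u hu] := S_elem (ltn_ord m).
have hu' := hu; rewrite ES in hu'; exact: disS hu hu'.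
Qed.

Lemma card_W0 : #|W0| = 4.
Proof. by rewrite card_imset; [rewrite card_ord | exact: W0seg_inj]. Qed.

Lemma W0_mem m : (m < 4)%N -> W0seg m \in W0.
Proof. by move=> hm; apply/imsetP; exists (Ordinal hm). Qed.

Lemma card_seg : #|seg| = 'C(p + q, 2).
Proof.
rewrite card_sig; have := card_draws T 2; rewrite card_sum !card_ord => <-.
by apply: eq_card => s; rewrite !inE.
Qed.

Definition U0 := ~: W0.

Lemma U0_card : #|U0| = ('C(p + q, 2) - 4)%N.
Proof. have := cardsC W0; rewrite card_W0 card_seg /U0; lia. Qed.

Lemma U0_mv : mutual_visibility_set adj U0.
Proof.
move=> x y hx hy nxy.
case: (classic (adj x y)) => hadj.
  exists [:: y]; split; last by move=> z; rewrite /= in_nil.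
  split; first by split.
  split => //.
  move=> s' ws' ls'; case: s' ws' ls' => [|z s'] //= _ E; by case: nxy.
case: (LB_pair hadj) => m [hm a1 a2].
exists [:: W0seg m; y]; split.
  split; first by split; [exact: adj_sym | split].
  split => //.
  move=> s' ws' ls'; case: s' ws' ls' => [|z [|z' s']] //=.
  by move=> [h _] E; move: h; rewrite E.
move=> z; rewrite /= inE => /eqP ->; rewrite in_setC negbK; exact: W0_mem.
Qed.


Lemma UB (U : {set seg}) : mutual_visibility_set adj U -> (#|U| <= 'C(p + q, 2) - 4)%N.
Proof.
move=> mv; rewrite leqNgt; apply/negP => big.
have cW : (#|~: U| <= 3)%N by have := cardsC U; rewrite card_seg; lia.
set l := enum (~: U).
have sl : (size l <= 3)%N by rewrite /l -cardE.
set s0 := W0seg 0.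
set w1 := nth s0 l 0; set w2 := nth s0 l 1; set w3 := nth s0 l 2.
have Wcov : forall w, w \notin U -> [\/ w = w1, w = w2 | w = w3].
  move=> w hw; have wl : w \in l by rewrite /l mem_enum in_setC.
  have il0 : (index w l < size l)%N by rewrite index_mem.
  have := nth_index s0 wl; move: il0.
  move: (index w l) => k; case: k => [|[|[|k]]] il E.
  - by constructor 1; rewrite -E.
  - by constructor 2; rewrite -E.
  - by constructor 3; rewrite -E.
  - exfalso; lia.
have c2 : forall w : seg, #|val w| = 2 by move=> w; exact/eqP/(valP w).
have cT : (6 < #|T|)%N by rewrite card_sum !card_ord; lia.
have [c [e1 [e2 [ne1 ne2 ne12 [G1 G2 G3]]]]] := comb3 (c2 w1) (c2 w2) (c2 w3) cT.
have Gv : forall v : seg, v \notin U -> Good c e1 e2 (val v).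
  by move=> v /Wcov [] ->.
pose x := mkseg ne1; pose y := mkseg ne2.
have hxU : x \in U.
  case: (boolP (x \in U)) => // hx'; case: (Gv x hx') => /=; by rewrite eqxx.
have hyU : y \in U.
  case: (boolP (y \in U)) => // hy'; case: (Gv y hy') => /=; by rewrite eqxx.
have nxy : x <> y.
  move=> E; have : e1 \in val y by rewrite -E /= !inE eqxx orbT.
  rewrite /= !inE => /orP [] /eqP E1.
    by have := ne1; rewrite E1 eqxx.
  by have := ne12; rewrite E1 eqxx.
have cx : c \in val x by rewrite /= !inE eqxx.
have cy : c \in val y by rewrite /= !inE eqxx.
have e1x : e1 \in val x by rewrite /= !inE eqxx orbT.
have e2y : e2 \in val y by rewrite /= !inE eqxx orbT.
have keyz : forall m, (m < 4)%N ->
    [\/ c \in SS m, e1 \in SS m | e2 \in SS m] \/ (adj (W0seg m) x /\ adj (W0seg m) y).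
  move=> m hm.
  case: (boolP [|| c \in SS m, e1 \in SS m | e2 \in SS m]) => [/or3P H|H]; first by left.
  right; split; apply: W0free => // u; rewrite /= !inE => /orP [] /eqP ->;
    by apply: contra H => ->; rewrite /= ?orbT.
have [m [hm z1 z2]] : exists m, [/\ (m < 4)%N, adj (W0seg m) x & adj (W0seg m) y].
  case: (keyz 0%N isT) => [h0|[? ?]]; last by exists 0%N.
  case: (keyz 1%N isT) => [h1|[? ?]]; last by exists 1%N.
  case: (keyz 2%N isT) => [h2|[? ?]]; last by exists 2%N.
  case: (keyz 3%N isT) => [h3|[? ?]]; last by exists 3%N.
  exfalso.
  case: h0 => H0; case: h1 => H1; try solve [disc]; case: h2 => H2; try solve [disc];
    case: h3 => H3; solve [disc].
have [s [[ws [ls smin]] sint]] := mv x y hxU hyU nxy.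
have ss := smin [:: W0seg m; y] (conj (adj_sym z1) (conj z2 I)) erefl.
case: s ws ls smin sint ss => [|z [|z' [|? ?]]] //=.
- by move=> [h _] E _ _ _; rewrite E in h; exact: (share cx cy h).
- move=> [h1 [h2 _]] E _ sint _.
  have hz : z \notin U by apply: sint; rewrite inE.
  case: (Gv z hz) => _ _ /or3P [H|H|H].
  + exact: (share cx H h1).
  + exact: (share e1x H h1).
  + by rewrite E in h2; exact: (share H e2y h2).
Qed.

End Main.

Local Close Scope ring_scope.

Theorem proposition6 (R : realType) (p q : nat)
    (a : 'I_p -> point R) (b : 'I_q -> point R) :
  (3 <= p)%N -> (6 <= q)%N ->
  is_double_chain a b -> general_position a b ->
  mu_eq (disj_adj a b) ('C(p + q, 2) - 4).
Proof.
move=> hp hq hdc _; split.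
  by exists (U0 hp hq hdc); split; [exact: U0_mv | exact: U0_card].
by move=> U; exact: UB.
Qed.
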